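(* Let $p$ be a prime, $n,e$ positive integers, and $u_{p,n,e}:\{1,\dots,n\}\to\mathbb{N}$, $u_{p,n,e}(k)=e\,\nu_p\binom{n}{k}+k$. Write $\ell=\log_p\frac{e}{p-1}$. Then the minimum value of $u_{p,n,e}$ is attained exactly at: (a) $k\in\{\frac{e}{p-1},\frac{pe}{p-1}\}$, if $\ell$ is an integer and $\ell<\nu_p(n)$; the minimum value is then $e\big(\nu_p(n)+\frac1{p-1}-\ell\big)$; (b) $k=p^{\nu_p(n)}$, if either $\ell$ is an integer with $\ell\ge\nu_p(n)$, or $\ell$ is not an integer and $\lceil\ell\rceil>\nu_p(n)$; the minimum value is then $p^{\nu_p(n)}$; (c) $k=p^{\lceil\ell\rceil}$, if $\ell$ is not an integer and $\lceil\ell\rceil\le\nu_p(n)$; the minimum value is then $e(\nu_p(n)-\lceil\ell\rceil)+p^{\lceil\ell\rceil}$.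
   Context: $\nu_p$ denotes the $p$-adic valuation. *)

(* Defs.v *)
From HB Require Import structures.
From mathcomp Require Import all_boot all_order all_algebra.
Set Implicit Arguments. Unset Strict Implicit. Unset Printing Implicit Defensive.
Import Order.TTheory GRing.Theory Num.Theory.

Definition uval (p n e k : nat) : nat := (e * logn p 'C(n, k) + k)%N.

Definition is_min_at (p n e k : nat) : Prop :=
  (0 < k <= n)%N /\ forall j : nat, (0 < j <= n)%N -> (uval p n e k <= uval p n e j)%N.

Local Open Scope ring_scope.

(* the rational number e/(p-1), so that ell = log_p (ell_ratio p e) *)
Definition ell_ratio (p e : nat) : rat := (e%:R : rat) / ((p%:R : rat) - 1).

Definition ell_eq_int (p e : nat) (m : int) : Prop := ell_ratio p e = (p%:R : rat) ^ m.

Definition ell_is_int (p e : nat) : Prop := exists m : int, ell_eq_int p e m.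

(* c = ceil(ell): p^(c-1) < e/(p-1) <= p^c (p^x being increasing since p > 1) *)
Definition ell_ceil (p e : nat) (c : int) : Prop :=
  (p%:R : rat) ^ (c - 1) < ell_ratio p e <= (p%:R : rat) ^ c.

(* Main.v *)
Require Import Defs.
From HB Require Import structures.
From mathcomp Require Import all_boot all_order all_algebra.
From mathcomp Require Import zify ring.
Import Order.TTheory GRing.Theory Num.Theory.
Lemma logC_lb p n k : prime p -> (0 < k <= n)%N ->
  (logn p n <= logn p 'C(n, k) + logn p k)%N.
Proof.
move=> pp /andP[]; case: k => // k _ kn.
have := mul_bin_diag n k.
move=> /(congr1 (logn p)).
have n0 : (0 < n)%N by lia.
rewrite lognM // ?bin_gt0 ?lognM ?bin_gt0 //; last by lia.
lia.
Qed.

Lemma val_shift p n j a : prime p -> (p ^ j %| n)%N -> (0 < a < p ^ j)%N -> (0 < n)%N ->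
  logn p (n - a) = logn p a.
Proof.
move=> pp dj /andP[a0 aj] n0.
have pjn : (p ^ j <= n)%N by apply: dvdn_leq.
have na0 : (0 < n - a)%N by lia.
set t := logn p a.
have ta : (p ^ t %| a)%N by apply: pfactor_dvdnn.
have tle : (p ^ t <= a)%N by apply: dvdn_leq.
have tj : (t < j)%N.
  rewrite -(ltn_exp2l _ _ (prime_gt1 pp)); lia.
have h1 : (p ^ t %| n - a)%N.
  apply: dvdn_sub => //; apply: dvdn_trans dj; apply: dvdn_exp2l; lia.
have h2 : ~~ (p ^ t.+1 %| n - a)%N.
  apply/negP => h.
  have hn : (p ^ t.+1 %| n)%N by apply: dvdn_trans dj; apply: dvdn_exp2l; lia.
  have : (p ^ t.+1 %| n - (n - a))%N by apply: dvdn_sub.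
  rewrite subKn; last by apply: leq_trans pjn; apply: ltnW.
  rewrite pfactor_dvdn // /t; lia.
move: h1 h2; rewrite !pfactor_dvdn //; lia.
Qed.

Lemma logC_pow0 p n j : prime p -> (0 < n)%N -> (p ^ j %| n)%N ->
  forall i, (i < p ^ j)%N -> logn p 'C(n.-1, i) = 0%N.
Proof.
move=> pp n0 dj; elim=> [|i IH] hi; first by rewrite bin0 logn1.
have pjn : (p ^ j <= n)%N by apply: dvdn_leq.
have := mul_bin_left n.-1 i.
move=> /(congr1 (logn p)).
rewrite lognM // ?bin_gt0 ?lognM ?bin_gt0 ?IH //; try (clear dj IH; lia).
have -> : (n.-1 - i = n - i.+1)%N by lia.
rewrite (@val_shift p n j i.+1 pp dj) //; clear dj IH; lia.
Qed.

Lemma logC_pow p n j : prime p -> (0 < n)%N -> (p ^ j %| n)%N ->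
  (logn p 'C(n, p ^ j) + j)%N = logn p n.
Proof.
move=> pp n0 dj.
have pj0 : (0 < p ^ j)%N by rewrite expn_gt0 prime_gt0.
have pjn : (p ^ j <= n)%N by apply: dvdn_leq.
have := mul_bin_diag n (p ^ j).-1.
rewrite prednK //.
move=> /(congr1 (logn p)).
rewrite lognM // ?bin_gt0 ?lognM ?bin_gt0 ?(@logC_pow0 p n j pp n0 dj) ?pfactorK //; try (clear dj; lia).
Qed.


Definition gg (p n e j : nat) : nat := (e * (logn p n - j) + p ^ j)%N.

Lemma uval_pow p n e j : prime p -> (0 < n)%N -> (j <= logn p n)%N ->
  uval p n e (p ^ j) = gg p n e j /\ (0 < p ^ j <= n)%N.
Proof.
move=> pp n0 jv.
have dj : (p ^ j %| n)%N by rewrite pfactor_dvdn.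
have := @logC_pow p n j pp n0 dj => h.
split.
  rewrite /uval /gg; congr (_ * _ + _)%N; clear dj; lia.
by rewrite expn_gt0 prime_gt0 //= dvdn_leq.
Qed.

Lemma core_lb p n e k : prime p -> (0 < k <= n)%N ->
  exists j, (j <= logn p n)%N /\ (gg p n e j <= uval p n e k)%N /\
     (uval p n e k = gg p n e j -> k = p ^ j).
Proof.
move=> pp hk.
have k0 : (0 < k)%N by case/andP: hk.
set t := logn p k.
have tk : (p ^ t <= k)%N by apply: dvdn_leq => //; apply: pfactor_dvdnn.
have lb := @logC_lb p n k pp hk.
case: (leqP t (logn p n)) => tv.
  exists t; split=> //.
  have h : (e * (logn p n - t) <= e * logn p 'C(n, k))%N.
    by rewrite leq_mul2l; apply/orP; right; rewrite leq_subLR addnC.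
  rewrite /uval /gg.
  move: h tk; rewrite -/t.
  set A := (e * (logn p n - t))%N; set B := (e * logn p 'C(n, k))%N; set P := (p ^ t)%N.
  move=> h1 h2; split; [lia | move=> h3; lia].
exists (logn p n); split=> //.
have : (p ^ logn p n < p ^ t)%N by rewrite ltn_exp2l // prime_gt1.
rewrite /gg /uval subnn muln0 add0n.
set P := (p ^ logn p n)%N; set B := (e * logn p 'C(n, k))%N.
move=> h; split; [lia | move=> h3; lia].
Qed.

Lemma min_char p n e k : prime p -> (0 < n)%N ->
  is_min_at p n e k <-> exists j, [/\ (j <= logn p n)%N, k = p ^ j &
     forall i, (i <= logn p n)%N -> (gg p n e j <= gg p n e i)%N].
Proof.
move=> pp n0; split.
  move=> [hk hmin].
  have [j [jv [h1 h2]]] := @core_lb p n e k pp hk.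
  have [u1 r1] := @uval_pow p n e j pp n0 jv.
  have eq1 : uval p n e k = gg p n e j.
    by apply/eqP; rewrite eqn_leq h1 andbT -u1 hmin.
  exists j; split=> // [|i iv]; first by apply: h2.
  have [u2 r2] := @uval_pow p n e i pp n0 iv.
  by rewrite -eq1 -u2 hmin.
move=> [j [jv -> hj]].
have [u1 r1] := @uval_pow p n e j pp n0 jv.
split=> // k' hk'.
have [i [iv [h1 _]]] := @core_lb p n e k' pp hk'.
rewrite u1; apply: leq_trans h1; exact: hj.
Qed.

Lemma qmono p a b : prime p -> (a <= b)%N -> (p.-1 * p ^ a <= p.-1 * p ^ b)%N.
Proof. by move=> pp ab; rewrite leq_mul2l leq_pexp2l ?orbT // prime_gt0. Qed.

Lemma gstep p n e j : prime p -> (j < logn p n)%N ->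
  (gg p n e j.+1 + e = gg p n e j + p.-1 * p ^ j)%N.
Proof.
move=> pp jv; rewrite /gg.
have -> : (logn p n - j = (logn p n - j.+1).+1)%N by clear pp; lia.
have hp : p = (p.-1).+1 by rewrite prednK // prime_gt0.
rewrite expnS mulnS.
have -> : (p * p ^ j = p ^ j + p.-1 * p ^ j)%N by rewrite -mulSn -hp.
set A := (e * (logn p n - j.+1))%N; set B := (p.-1 * p ^ j)%N.
lia.
Qed.

Lemma gdec p n e i j : prime p -> (i < j <= logn p n)%N -> (p.-1 * p ^ j.-1 < e)%N ->
  (gg p n e j < gg p n e i)%N.
Proof.
move=> pp; elim: j => [|j IH] //= /andP[ij jv] he.
have st := @gstep p n e j pp jv.
have lt1 : (gg p n e j.+1 < gg p n e j)%N.
  move: st he; set A := gg p n e j.+1; set B := gg p n e j; set C := (p.-1 * p ^ j)%N; lia.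
case: (ltngtP i j) => [ij'||ije]; last by rewrite ije.
- apply: ltn_trans lt1 _; apply: IH.
  + by rewrite ij' ltnW.
  + apply: leq_ltn_trans he; apply: qmono => //; exact: leq_pred.
- by move=> h; move: ij; rewrite ltnS leqNgt h.
Qed.

Lemma ginc p n e i j : prime p -> (i < j <= logn p n)%N -> (e < p.-1 * p ^ i)%N ->
  (gg p n e i < gg p n e j)%N.
Proof.
move=> pp hij he; move: hij; elim: j => [|j IH] //= /andP[ij jv].
have st := @gstep p n e j pp jv.
have hq : (e < p.-1 * p ^ j)%N.
  apply: (leq_trans he); apply: qmono => //; by rewrite -ltnS.
have lt1 : (gg p n e j < gg p n e j.+1)%N.
  move: st hq; set A := gg p n e j.+1; set B := gg p n e j; set C := (p.-1 * p ^ j)%N; lia.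
case: (ltngtP i j) => [ij'||ije]; last by rewrite ije.
- apply: ltn_trans lt1; apply: IH; by rewrite ij' ltnW.
- by move=> h; move: ij; rewrite ltnS leqNgt h.
Qed.

Lemma uniq_min p n e k j0 : prime p -> (0 < n)%N -> (j0 <= logn p n)%N ->
  (forall i, (i <= logn p n)%N -> i <> j0 -> (gg p n e j0 < gg p n e i)%N) ->
  (is_min_at p n e k <-> k = p ^ j0) /\ (is_min_at p n e k -> uval p n e k = gg p n e j0).
Proof.
move=> pp n0 jv hmin.
have key : is_min_at p n e k <-> k = p ^ j0.
  rewrite (@min_char p n e k pp n0); split.
    move=> [j [jv' -> hj]].
    case: (eqVneq j j0) => [->//|ne].
    have := hj j0 jv; have := hmin j jv' (elimN eqP ne) => a b.
    by move: (leq_trans a b); rewrite ltnn.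
  move=> ->; exists j0; split=> // i iv.
  case: (eqVneq i j0) => [->//|ne]; apply: ltnW; exact: hmin i iv (elimN eqP ne).
split=> //; move=> /key ->; exact: (proj1 (@uval_pow p n e j0 pp n0 jv)).
Qed.

Lemma qlt p a b : prime p -> (a < b)%N -> (p.-1 * p ^ a < p.-1 * p ^ b)%N.
Proof.
move=> pp ab; rewrite ltn_pmul2l ?ltn_exp2l ?prime_gt1 //.
by have := prime_gt1 pp; case: p {pp} => // [] [].
Qed.

Lemma caseA p n e m k : prime p -> (0 < n)%N -> e = (p.-1 * p ^ m)%N -> (m < logn p n)%N ->
  (is_min_at p n e k <-> k = p ^ m \/ k = p ^ m.+1) /\
  (is_min_at p n e k -> uval p n e k = gg p n e m).
Proof.
move=> pp n0 he mv.
have eqg : gg p n e m.+1 = gg p n e m.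
  have := @gstep p n e m pp mv; rewrite -he; clear; lia.
have lo : forall i, (i < m)%N -> (gg p n e m < gg p n e i)%N.
  move=> i im; apply: gdec => //; first by rewrite im ltnW.
  rewrite he; apply: qlt => //; by case: m im {he mv eqg}.
have hi : forall i, (m.+1 < i <= logn p n)%N -> (gg p n e m.+1 < gg p n e i)%N.
  move=> i hi; apply: ginc => //; rewrite he; exact: qlt.
have key : is_min_at p n e k <-> k = p ^ m \/ k = p ^ m.+1.
  rewrite (@min_char p n e k pp n0); split.
    move=> [j [jv -> hj]].
    case: (ltngtP j m) => [jm|mj|->]; last by left.
    - have := hj m (ltnW mv); have := lo j jm => a b.
      by move: (leq_trans a b); rewrite ltnn.
    - case: (ltngtP j m.+1) => [jm'|mj'|->]; last by right.
      + by move: mj; rewrite ltnNge -ltnS jm'.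
      + have := hj m.+1 mv; have := hi j; rewrite mj' jv => /(_ isT) a b.
        by move: (leq_trans a b); rewrite ltnn.
  have hall : forall i, (i <= logn p n)%N -> (gg p n e m <= gg p n e i)%N.
    move=> i iv; case: (ltngtP i m) => [im|mi|->//]; first by apply: ltnW; exact: lo.
    case: (ltngtP i m.+1) => [im'|mi'|->]; last by rewrite eqg.
    - by move: mi; rewrite ltnNge -ltnS im'.
    - rewrite -eqg; apply: ltnW; apply: hi; by rewrite mi' iv.
  move=> [->|->].
    by exists m; split=> //; exact: ltnW.
  exists m.+1; split=> // i iv; rewrite eqg; exact: hall.
split=> //.
have := @uval_pow p n e m pp n0 (ltnW mv); have := @uval_pow p n e m.+1 pp n0 mv.
move=> [u2 _] [u1 _] /key [->|->] //; by rewrite u2 eqg.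
Qed.

Lemma caseB p n e k : prime p -> (0 < n)%N ->
  (logn p n = 0%N \/ (p.-1 * p ^ (logn p n).-1 < e)%N) ->
  (is_min_at p n e k <-> k = p ^ logn p n) /\
  (is_min_at p n e k -> uval p n e k = p ^ logn p n).
Proof.
move=> pp n0 h.
have [A B] : (is_min_at p n e k <-> k = p ^ logn p n) /\
  (is_min_at p n e k -> uval p n e k = gg p n e (logn p n)).
  apply: (@uniq_min p n e k (logn p n) pp n0 (leqnn _)) => i iv ine.
  have iv' : (i < logn p n)%N by rewrite ltn_neqAle iv andbT; apply/eqP.
  apply: gdec => //; first by rewrite iv' leqnn.
  by case: h => [h|//]; move: iv'; rewrite h.
split=> // /B ->; by rewrite /gg subnn muln0.
Qed.

Lemma caseC p n e k c : prime p -> (0 < n)%N -> (c <= logn p n)%N ->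
  (c = 0%N \/ (p.-1 * p ^ c.-1 < e)%N) -> (e < p.-1 * p ^ c)%N ->
  (is_min_at p n e k <-> k = p ^ c) /\
  (is_min_at p n e k -> uval p n e k = gg p n e c).
Proof.
move=> pp n0 cv h1 h2.
apply: (@uniq_min p n e k c pp n0 cv) => i iv ine.
case: (ltngtP i c) => [ic|ci|ice]; last by [].
- apply: gdec => //; first by rewrite ic cv.
  by case: h1 => [h|//]; move: ic; rewrite h.
- apply: ginc => //; by rewrite ci iv.
Qed.

Local Open Scope ring_scope.
Lemma natR_eq (a b : nat) : (a%:R = b%:R :> rat) <-> a = b.
Proof. by split=> [h|->//]; apply/eqP; rewrite -(eqr_nat rat) h. Qed.

Lemma frac_eq (a b c d : nat) : (0 < b)%N -> (0 < d)%N ->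
  (a%:R / b%:R = c%:R / d%:R :> rat) <-> (a * d = c * b)%N.
Proof.
move=> b0 d0; split.
  move/eqP; rewrite eqr_div ?pnatr_eq0 -?lt0n // -!natrM eqr_nat => /eqP //.
move=> h; apply/eqP; rewrite eqr_div ?pnatr_eq0 -?lt0n // -!natrM h //.
Qed.

Lemma frac_le (a b c d : nat) : (0 < b)%N -> (0 < d)%N ->
  (a%:R / b%:R <= c%:R / d%:R :> rat) = (a * d <= c * b)%N.
Proof.
move=> b0 d0.
by rewrite ler_pdivlMr ?ltr0n // mulrAC ler_pdivrMr ?ltr0n // -!natrM ler_nat.
Qed.

Lemma frac_lt (a b c d : nat) : (0 < b)%N -> (0 < d)%N ->
  (a%:R / b%:R < c%:R / d%:R :> rat) = (a * d < c * b)%N.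
Proof.
move=> b0 d0.
by rewrite ltr_pdivlMr ?ltr0n // mulrAC ltr_pdivrMr ?ltr0n // -!natrM ltr_nat.
Qed.

Lemma ratio_eq p e : prime p -> ell_ratio p e = e%:R / (p.-1)%:R.
Proof.
move=> pp; rewrite /ell_ratio; congr (_ / _).
have hp : p = (p.-1).+1 by rewrite prednK // prime_gt0.
by rewrite {1}hp -addn1 natrD addrK.
Qed.

Lemma powP (p m : nat) : (p%:R : rat) ^ (Posz m) = (p ^ m)%:R / 1%:R.
Proof. by rewrite divr1 natrX. Qed.

Lemma powN (p m : nat) : (p%:R : rat) ^ (Negz m) = 1%:R / (p ^ m.+1)%:R.
Proof. by rewrite div1r natrX. Qed.

Lemma q_gt0 p : prime p -> (0 < p.-1)%N.
Proof. by move=> pp; have := prime_gt1 pp; case: p {pp} => // [] []. Qed.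

Lemma negpow_false p e m : prime p -> (0 < e)%N ->
  (e * p ^ m.+1 <= 1 * p.-1)%N -> False.
Proof.
move=> pp e0 h.
have h1 : (p <= p ^ m.+1)%N by rewrite -{1}(expn1 p) leq_pexp2l // prime_gt0.
have h2 : (p ^ m.+1 <= e * p ^ m.+1)%N by rewrite leq_pmull.
have := prime_gt1 pp; move: h h1 h2.
set P := (p ^ m.+1)%N; set X := (e * P)%N; lia.
Qed.

Lemma L_eqint p e m : prime p -> (0 < e)%N -> ell_eq_int p e m ->
  exists m' : nat, m = Posz m' /\ e = (p.-1 * p ^ m')%N.
Proof.
move=> pp e0; rewrite /ell_eq_int (@ratio_eq p e pp).
have q0 := @q_gt0 p pp.
case: m => m.
  rewrite powP frac_eq // => h; exists m; split=> //; move: h; rewrite muln1 mulnC //.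
rewrite powN frac_eq ?q0 ?expn_gt0 ?prime_gt0 // => h.
exfalso; apply: (@negpow_false p e m pp e0); by rewrite h.
Qed.

Lemma L_int_of p e m : prime p -> e = (p.-1 * p ^ m)%N -> ell_eq_int p e (Posz m).
Proof.
move=> pp he; rewrite /ell_eq_int (@ratio_eq p e pp) powP frac_eq ?q_gt0 //.
by rewrite he muln1 mulnC.
Qed.

Lemma L_ceil p e c : prime p -> (0 < e)%N -> ell_ceil p e c ->
  exists c' : nat, [/\ c = Posz c', (e <= p.-1 * p ^ c')%N &
     (c' = 0%N \/ (p.-1 * p ^ c'.-1 < e)%N)].
Proof.
move=> pp e0; rewrite /ell_ceil (@ratio_eq p e pp).
have q0 := @q_gt0 p pp.
case: c => c /andP[lo hi].
  exists c; split=> //.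
    by move: hi; rewrite powP frac_le // muln1 mulnC.
  case: c lo hi => [|c]; first by left.
  have -> : (Posz c.+1 - 1 = Posz c)%R by rewrite -addn1 PoszD addrK.
  rewrite powP frac_lt // muln1 mulnC => h _; by right.
exfalso; move: hi; rewrite powN frac_le ?q0 ?expn_gt0 ?prime_gt0 // => h.
exact: (@negpow_false p e c pp e0 h).
Qed.
Theorem mainTheorem14 (p n e : nat) (hp : prime p) (hn : (0 < n)%N) (he : (0 < e)%N) :
  (* (a) *)
  (forall m : int, ell_eq_int p e m -> m < (logn p n)%:Z ->
     (forall k : nat, is_min_at p n e k <->
        ((k%:R : rat) = ell_ratio p e \/ (k%:R : rat) = (p%:R : rat) * ell_ratio p e)) /\
     (forall k : nat, is_min_at p n e k ->
        ((uval p n e k)%:R : rat) =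
          (e%:R : rat) * ((logn p n)%:R + 1 / ((p%:R : rat) - 1) - m%:~R))) /\
  (* (b) *)
  ((exists m : int, ell_eq_int p e m /\ (logn p n)%:Z <= m) \/
   (~ ell_is_int p e /\ exists c : int, ell_ceil p e c /\ (logn p n)%:Z < c) ->
     (forall k : nat, is_min_at p n e k <-> k = (p ^ logn p n)%N) /\
     (forall k : nat, is_min_at p n e k -> uval p n e k = (p ^ logn p n)%N)) /\
  (* (c) *)
  (forall c : int, ~ ell_is_int p e -> ell_ceil p e c -> c <= (logn p n)%:Z ->
     (forall k : nat, is_min_at p n e k <-> (k%:R : rat) = (p%:R : rat) ^ c) /\
     (forall k : nat, is_min_at p n e k ->
        ((uval p n e k)%:R : rat) =
          (e%:R : rat) * ((logn p n)%:R - c%:~R) + (p%:R : rat) ^ c)).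
Proof.
have q0 := @q_gt0 p hp.
have hq : ((p%:R : rat) - 1) = (p.-1)%:R.
  by have := @ratio_eq p 1 hp; rewrite /ell_ratio !div1r => /invr_inj.
split; [|split].
- move=> m hm mv.
  have [m' [Em hem]] := @L_eqint p e m hp he hm; subst m.
  move: mv; rewrite ltz_nat => mv.
  have rE : ell_ratio p e = (p ^ m')%:R.
    rewrite (@ratio_eq p e hp) hem natrM mulrAC divff ?mul1r // pnatr_eq0 -lt0n //.
  split=> k.
    have [A _] := @caseA p n e m' k hp hn hem mv.
    rewrite A rE -natrM -expnS !natR_eq //.
  move=> hk.
  have [_ B] := @caseA p n e m' k hp hn hem mv.
  rewrite (B hk) /gg natrD natrM natrB ?(ltnW mv) // -rE hq (@ratio_eq p e hp).
  rewrite /=; ring.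
- move=> [[m [hm vm]]|[nint [c [hc vc]]]].
    have [m' [Em hem]] := @L_eqint p e m hp he hm.
    move: vm; rewrite Em lez_nat => vm.
    have H : (logn p n = 0%N \/ (p.-1 * p ^ (logn p n).-1 < e)%N).
      case: (posnP (logn p n)) => [->|v0]; [by left | right].
      rewrite hem; apply: qlt => //; clear -v0 vm; lia.
    by split=> k; have [A B] := @caseB p n e k hp hn H.
  have [c' [Ec hle hlo]] := @L_ceil p e c hp he hc.
  move: vc; rewrite Ec ltz_nat => vc.
  have hlo' : (p.-1 * p ^ c'.-1 < e)%N by case: hlo => // h; move: vc; rewrite h.
  have H : (logn p n = 0%N \/ (p.-1 * p ^ (logn p n).-1 < e)%N).
    case: (posnP (logn p n)) => [->|v0]; [by left | right].
    apply: leq_ltn_trans hlo'; apply: qmono => //; clear -vc; lia.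
  by split=> k; have [A B] := @caseB p n e k hp hn H.
- move=> c nint hc cv.
  have [c' [Ec hle hlo]] := @L_ceil p e c hp he hc.
  move: cv; rewrite Ec lez_nat => cv.
  have hlt : (e < p.-1 * p ^ c')%N.
    rewrite ltn_neqAle hle andbT; apply/eqP => h; apply: nint.
    exists (Posz c'); exact: (@L_int_of p e c' hp h).
  subst c.
  split=> k; have [A B] := @caseC p n e k c' hp hn cv hlo hlt.
    by rewrite A powP divr1; split=> [->|/natR_eq].
  move=> hk; rewrite (B hk) /gg natrD natrM natrB // natrX.
by [].
Qed.
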